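(* Let $t=(k_1,\dots,k_l)$ be a parameter tuple of length $l\in\mathbb{N}$, let $m\in\mathbb{N}_0$ and $s\in\mathbb{R}$ with $s>1$. Then $$\mathrm{vdW}_{m+l}(\underbrace{2,\dots,2}_{m},k_1,\dots,k_l)\le\max\big(s\cdot m+1,\ \mathrm{cr}_{\mathrm{ap}}(t,1-\tfrac1s)\big).$$
   Context: A parameter tuple is a non-decreasing tuple $(k_1,\dots,k_r)$ of integers $k_i\ge2$. An arithmetic progression of size $k$ in $\mathbb{N}$ is a $k$-element set $P\subset\mathbb{N}$ such that, in natural order, consecutive elements always have the same distance (for $k>1$: sets $\{a+id: i=0,\dots,k-1\}$ with $a,d\in\mathbb{N}$). For a parameter tuple $(k_1,\dots,k_r)$, the van der Waerden number $\mathrm{vdW}_r(k_1,\dots,k_r)$ is the smallest $n_0\in\mathbb{N}$ such that for every $n\ge n_0$ and every $f:\{1,\dots,n\}\to\{1,\dots,r\}$ there is $i$ such that $f^{-1}(i)$ contains an arithmetic progression of size $k_i$. Let $\mathrm{ap}(k,n)$ be the hypergraph with vertex set $\{1,\dots,n\}$ whose hyperedges are the arithmetic progressions of size $k$ in $\{1,\dots,n\}$. For $q>0$, $\mathrm{cr}_{\mathrm{ap}}(t,q)\in\mathbb{N}\cup\{+\infty\}$ is the infimum of all $n\in\mathbb{N}$ such that for all $n'\ge n$ and all pairwise disjoint $S_1,\dots,S_l\subseteq\{1,\dots,n'\}$ with $S_i$ containing no arithmetic progression of size $k_i$, we have $\frac{|S_1|+\dots+|S_l|}{n'}<q$ (infimum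 of the empty set is $+\infty$). *)

(* Defs.v *)
From HB Require Import structures.
From mathcomp Require Import all_boot all_order all_algebra.
From mathcomp Require Import boolp classical_sets reals constructive_ereal ereal.
Set Implicit Arguments. Unset Strict Implicit. Unset Printing Implicit Defensive.
Import Order.TTheory GRing.Theory Num.Theory.
Local Open Scope classical_set_scope.
Local Open Scope ring_scope.
Local Open Scope ereal_scope.

Definition param_tuple (t : seq nat) : Prop :=
  sorted leq t /\ all (fun k => 2 <= k)%N t.

Definition has_ap (k : nat) (S : nat -> Prop) : Prop :=
  exists a d : nat, (0 < a)%N /\ (0 < d)%N /\ forall i, (i < k)%N -> S (a + i * d)%N.

(* Element y : 'I_n represents the integer y+1 of {1,...,n}. *)
Definition set_of_ord (n : nat) (A : {set 'I_n}) : nat -> Prop :=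
  fun x => exists y : 'I_n, y \in A /\ x = y.+1.

Definition colour_class (n r : nat) (f : 'I_n -> 'I_r) (i : 'I_r) : nat -> Prop :=
  set_of_ord [set y | f y == i].

Definition vdW_prop (ks : seq nat) (n0 : nat) : Prop :=
  forall n : nat, (n0 <= n)%N ->
  forall f : 'I_n -> 'I_(size ks),
  exists i : 'I_(size ks), has_ap (nth 0%N ks i) (colour_class f i).

(* vdW_r(k_1,...,k_r): the smallest n0 in N with vdW_prop (inf of empty = +oo). *)
Definition vdW (R : realType) (ks : seq nat) : \bar R :=
  ereal_inf [set (n0%:R)%:E | n0 in [set n0 : nat | (0 < n0)%N /\ vdW_prop ks n0]].

Definition cr_prop (R : realType) (t : seq nat) (q : R) (n : nat) : Prop :=
  forall n' : nat, (n <= n')%N ->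
  forall S : 'I_(size t) -> {set 'I_n'},
    (forall i j : 'I_(size t), i != j -> (S i :&: S j == finset.set0)) ->
    (forall i : 'I_(size t), ~ has_ap (nth 0%N t i) (set_of_ord (S i))) ->
    (((\sum_(i : 'I_(size t)) #|S i|)%N)%:R / n'%:R < q)%R.

Definition cr_ap (R : realType) (t : seq nat) (q : R) : \bar R :=
  ereal_inf [set (n%:R)%:E | n in [set n : nat | (0 < n)%N /\ cr_prop t q n]].

(* Main.v *)
Require Import Defs.
From HB Require Import structures.
From mathcomp Require Import all_boot all_order all_algebra.
From mathcomp Require Import boolp classical_sets reals constructive_ereal ereal.
From mathcomp Require Import lra.
Import Order.TTheory GRing.Theory Num.Theory.
Local Open Scope ring_scope.
Local Open Scope ereal_scope.

Lemma key (R : realType) (t : seq nat) (m n : nat) (s : R) :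
  (1 < s)%R -> (s * m%:R < n%:R)%R -> cr_prop t (1 - 1 / s)%R n ->
  forall f : 'I_n -> 'I_(size (nseq m 2%N ++ t)),
  exists i : 'I_(size (nseq m 2%N ++ t)),
    has_ap (nth 0%N (nseq m 2%N ++ t) i) (colour_class f i).
Proof.
move=> s1 smn cr.
have hsz : size (nseq m 2%N ++ t) = (m + size t)%N by rewrite size_cat size_nseq.
move: (size (nseq m 2%N ++ t)) hsz => K eK; subst K => f.
apply: contrapT => Hno.
have nth1 (i : 'I_m) : nth 0%N (nseq m 2%N ++ t) (lshift (size t) i) = 2%N.
  by rewrite /= nth_cat size_nseq ltn_ord nth_nseq ltn_ord.
have nth2 (j : 'I_(size t)) : nth 0%N (nseq m 2%N ++ t) (rshift m j) = nth 0%N t j.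
  by rewrite /= nth_cat size_nseq ltnNge leq_addr /= addKn.
have small (i : 'I_m) : (#|[set y | f y == lshift (size t) i]| <= 1)%N.
  rewrite leqNgt; apply/negP => /card_gt1P [y1 [y2 [H1 H2 H12]]].
  apply: Hno; exists (lshift (size t) i); rewrite nth1.
  wlog lt12 : y1 y2 H1 H2 H12 / (y1 < y2)%N.
    move=> W; case: (ltngtP y1 y2) => h.
    - exact: (W y1 y2).
    - by apply: (W y2 y1) => //; rewrite eq_sym.
    - by move: H12; rewrite (val_inj h) eqxx.
  exists y1.+1, (y2 - y1)%N; split => //; split; first by rewrite subn_gt0.
  case=> [|[|k]] // _.
    by exists y1; rewrite mul0n addn0.
  by exists y2; rewrite mul1n addSn subnKC // ltnW.
pose S (j : 'I_(size t)) := [set y | f y == rshift m j].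
have disj (i j : 'I_(size t)) : i != j -> (S i :&: S j == finset.set0).
  move=> hij; apply/eqP/setP => y; rewrite !inE.
  apply/negP => /andP [/eqP -> /eqP h]; move/negP: hij; apply.
  by apply/eqP/val_inj; move: (congr1 val h) => /= /eqP; rewrite eqn_add2l => /eqP.
have noap (j : 'I_(size t)) : ~ has_ap (nth 0%N t j) (set_of_ord (S j)).
  by move=> h; apply: Hno; exists (rshift m j); rewrite nth2.
have := cr n (leqnn n) S disj noap.
have cnt : (n = \sum_(i < m + size t) #|[set y | f y == i]|)%N.
  rewrite -{1}(card_ord n) -sum1_card (partition_big f predT) //=.
  by apply: eq_bigr => i _; rewrite sum1_card cardsE.
have hsum : (n <= m + \sum_(j < size t) #|S j|)%N.
  rewrite {1}cnt big_split_ord /= leq_add2r.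
  apply: leq_trans (_ : \sum_(i < m) 1 <= m)%N.
    by apply: leq_sum => i _; apply: small.
  by rewrite sum1_card card_ord.
set X := (\sum_(j < size t) #|S j|)%N in hsum *.
have s0 : (0 < s)%R by apply: lt_trans s1.
have n0 : (0 < n%:R :> R)%R.
  by apply: le_lt_trans smn; apply: mulr_ge0; [apply: ltW|apply: ler0n].
rewrite ltr_pdivrMr // mulrBl mul1r => h.
have hX : (n%:R <= m%:R + X%:R :> R)%R by rewrite -natrD ler_nat.
have h2 : (1 / s * n%:R < m%:R :> R)%R by lra.
move: h2; rewrite mul1r -mulrC ltr_pdivrMr // => h3.
lra.
Qed.

Theorem corollary1 (R : realType) (t : seq nat) (m : nat) (s : R) :
  param_tuple t -> (0 < size t)%N -> (1 < s)%R ->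
  vdW R (nseq m 2%N ++ t) <=
    maxe ((s * m%:R + 1)%R)%:E (cr_ap t (1 - 1 / s)%R).
Proof.
move=> _ _ s1.
have s0 : (0 < s)%R by apply: lt_trans s1.
have sm0 : (0 <= s * m%:R)%R by apply: mulr_ge0; [apply: ltW|apply: ler0n].
set N := (Num.truncn (s * m%:R)).+1.
have HN1 : (s * m%:R < N%:R)%R by apply: truncnS_gt.
have HN2 : (N%:R <= s * m%:R + 1)%R.
  by rewrite /N -addn1 natrD lerD2r truncn_le.
have hmain (n1 : nat) : (0 < n1)%N -> cr_prop t (1 - 1 / s)%R n1 ->
    vdW R (nseq m 2%N ++ t) <= maxe ((s * m%:R + 1)%R)%:E (n1%:R)%:E.
  move=> n1pos crn1.
  apply: ereal_inf_le; exists ((maxn N n1)%:R)%:E.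
    exists (maxn N n1) => //; split; first by rewrite leq_max n1pos orbT.
    move=> n hn f; apply: (@key R t m n s) => //.
      apply: lt_le_trans HN1 _; rewrite ler_nat; apply: leq_trans hn.
      by rewrite leq_maxl.
    move=> n' hn'; apply: crn1; apply: leq_trans hn'.
    by apply: leq_trans hn; rewrite leq_maxr.
  rewrite le_max; case: (leqP N n1) => h.
    by rewrite lexx orbT.
  by rewrite lee_fin HN2.
have [h|h] := leP (vdW R (nseq m 2%N ++ t)) ((s * m%:R + 1)%R)%:E.
  by rewrite le_max h.
rewrite le_max.
apply/orP; right.
rewrite /cr_ap; apply: le_ereal_inf_tmp => y [n1 [n1pos crn1]] <-.
have := hmain n1 n1pos crn1; rewrite le_max => /orP [h'|//].
by move: h'; rewrite (lt_geF h).
Qed.
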